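(* Let $I$ be an index set of non-measurable cardinality and $H$ the group $\mathbb Z^{(I)}$ with the topology of pointwise convergence on $\mathbb Z^I$. Let $\bar t\in\mathbb T^I$ and suppose there is an infinite set $J\subseteq I$ such that $\bar t(i)$ is irrational for every $i\in J$ and the set $\{\bar t(i):i\in J\}$ is linearly independent over $\mathbb Q$. Then $\bar t\notin\widehat H$.
   Context: $\mathbb Z^{(I)}$ is the group of finitely supported functions $I\to\mathbb Z$, paired with $\mathbb Z^I$ by $\langle\bar g,\bar x\rangle=\sum_i\bar g(i)\bar x(i)$; $H$ carries the weakest topology making all maps $\bar g\mapsto\langle\bar g,\bar x\rangle\in\mathbb Z$ ($\mathbb Z$ discrete) continuous. $\mathbb T=\mathbb R/\mathbb Z$ is identified with $(-1/2,1/2]$ with addition mod $1$, so elements of $\mathbb T$ are regarded as real numbers. An element $\bar t\in\mathbb T^I$ is identified with the homomorphism $H\to\mathbb T$, $\bar g\mapsto\sum_i\bar g(i)\bar t(i)$, and $\widehat H$ (continuous homomorphisms $H\to\mathbb T$) is thereby a subgroup of $\mathbb T^I$. *)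

(* Defs.v *)
From HB Require Import structures.
From mathcomp Require Import all_boot all_order all_algebra.
From mathcomp Require Import boolp classical_sets functions cardinality fsbigop reals.
Set Implicit Arguments. Unset Strict Implicit. Unset Printing Implicit Defensive.
Import Order.TTheory GRing.Theory Num.Theory.
Local Open Scope classical_set_scope.
Local Open Scope ring_scope.

(** Ulam-measurable cardinality: I carries a countably complete
    non-principal ultrafilter.  "Non-measurable cardinality" = not this. *)
Definition ulam_measurable (I : Type) : Prop :=
  exists U : set (set I),
    ~ U set0 /\
    (forall A B, U A -> A `<=` B -> U B) /\
    (forall A B, U A -> U B -> U (A `&` B)) /\
    (forall A, U A \/ U (~` A)) /\
    (forall F : nat -> set I, (forall n, U (F n)) -> U (\bigcap_n F n)) /\
    (forall i, ~ U [set i]).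

Definition zsupp (I : Type) (g : I -> int) : set {classic I} :=
  [set i | g i != 0].

Definition in_H (I : Type) (g : I -> int) : Prop := finite_set (zsupp g).

Definition pairing (I : Type) (g x : I -> int) : int :=
  \sum_(i \in zsupp g) (g i * x i).

(** The (real representative of the) value of the homomorphism
    attached to t in T^I at g: sum_i g(i) t(i), taken mod 1 below. *)
Definition char_val (R : realType) (I : Type) (t : I -> R) (g : I -> int) : R :=
  \sum_(i \in zsupp g) ((g i)%:~R * t i).

(** Distance in T = R/Z between the classes of a and b is < e. *)
Definition T_close (R : realType) (a b e : R) : Prop :=
  exists k : int, `|a - b - k%:~R| < e.

(** t (viewed as a homomorphism H -> T) is continuous when H carries the
    weakest topology making all g |-> <g,x> (x in Z^I, Z discrete)
    continuous: basic neighbourhoods of g0 are finite intersections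
    of sets {g in H | <g,x> = <g0,x>}. *)
Definition in_dual (R : realType) (I : Type) (t : I -> R) : Prop :=
  forall g0 : I -> int, in_H g0 ->
  forall e : R, 0 < e ->
  exists xs : seq (I -> int),
    forall g : I -> int, in_H g ->
      (forall x, x \in xs -> pairing g x = pairing g0 x) ->
      T_close (char_val t g) (char_val t g0) e.

(** T is identified with (-1/2, 1/2]. *)
Definition in_T (R : realType) (a : R) : Prop := - (2^-1) < a <= 2^-1.

Definition is_rational (R : realType) (a : R) : Prop := exists q : rat, a = ratr q.

Definition Q_lin_indep (R : realType) (I : Type) (t : I -> R) (J : set I) : Prop :=
  forall (s : seq {classic I}) (q : I -> rat),
    uniq s -> (forall i, i \in s -> J i) ->
    \sum_(i <- s) ratr (q i) * t i = 0 ->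
    forall i, i \in s -> q i = 0.

(* Main.v *)
Require Import Defs.
From HB Require Import structures.
From mathcomp Require Import all_boot all_order all_algebra.
From mathcomp Require Import boolp classical_sets functions cardinality fsbigop reals.
From mathcomp Require Import lra zify.
Import Order.TTheory GRing.Theory Num.Theory.
Local Open Scope classical_set_scope.
Local Open Scope ring_scope.

Section Comb.
Variable I : Type.
Notation T := {classic I}.

Lemma sumE (V : zmodType) (g : I -> int) (s : seq T) (F : T -> V) :
  uniq s -> (forall i : T, g i != 0 -> i \in s) -> (forall i : T, g i = 0 -> F i = 0) ->
  \sum_(i \in zsupp g) F i = \sum_(i <- s) F i.
Proof.
move=> us gs F0; apply: fsbig_fwiden => //.
- move=> i [/= _ ni]; apply: F0; apply/eqP.
  by move/negP: ni; rewrite negbK.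
Qed.

Lemma catL (V : zmodType) (s1 s2 : seq T) (F : T -> V) :
  (forall i : T, i \in s2 -> F i = 0) -> \sum_(i <- s1 ++ s2) F i = \sum_(i <- s1) F i.
Proof. by move=> h; rewrite big_cat /= [X in _ + X]big1_seq ?addr0 // => i /andP[_ /h]. Qed.

Lemma catR (V : zmodType) (s1 s2 : seq T) (F : T -> V) :
  (forall i : T, i \in s1 -> F i = 0) -> \sum_(i <- s1 ++ s2) F i = \sum_(i <- s2) F i.
Proof. by move=> h; rewrite big_cat /= [X in X + _]big1_seq ?add0r // => i /andP[_ /h]. Qed.

Definition ceq (a b : I) : bool := @eq_op T a b.

Lemma comb (g1 g2 : I -> int) (s1 s2 : seq T) (J' : set I) (a b : int) :
  uniq s1 -> uniq s2 -> (forall i : T, i \in s1 -> J' i) ->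
  (forall i : T, i \in s2 -> (J' `\` [set` s1]) i) ->
  (forall i : T, g1 i != 0 -> i \in s1) -> (forall i : T, g2 i != 0 -> i \in s2) ->
  (exists i : T, g2 i != 0) -> a != 0 ->
  [/\ uniq (s1 ++ s2), (forall i : T, i \in s1 ++ s2 -> J' i),
     (forall i : T, b * g1 i - a * g2 i != 0 -> i \in s1 ++ s2),
     (exists i : T, b * g1 i - a * g2 i != 0) &
     forall (V : comRingType) (F : T -> V),
       \sum_(i <- s1 ++ s2) (b * g1 i - a * g2 i)%:~R * F i =
       b%:~R * \sum_(i <- s1) (g1 i)%:~R * F i - a%:~R * \sum_(i <- s2) (g2 i)%:~R * F i].
Proof.
move=> u1 u2 J1 J2 S1 S2 [i2 nz2] a0.
have dis : forall i : T, i \in s2 -> i \notin s1.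
  by move=> i /J2 [_ /negP].
have g1z : forall i : T, i \in s2 -> g1 i = 0.
  move=> i /dis h; apply/eqP; apply/negP => /negP /S1; exact/negP.
have g2z : forall i : T, i \in s1 -> g2 i = 0.
  move=> i h; apply/eqP; apply/negP => /negP /S2 /dis; rewrite h.
  done.
split.
- rewrite cat_uniq u1 u2 andbT /=; apply/hasPn => i /dis //.
- by move=> i; rewrite mem_cat => /orP[/J1|/J2 []].
- move=> i nz.
  case: (boolP (g1 i == 0)) => [/eqP h1|/S1 h]; last by rewrite mem_cat h.
  case: (boolP (g2 i == 0)) => [/eqP h2|/S2 h]; last by rewrite mem_cat h orbT.
  by move: nz; rewrite h1 h2 !mulr0 subr0 eqxx.
- exists i2; rewrite g1z ?S2 // mulr0 sub0r oppr_eq0 mulf_neq0 //.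
- move=> V F.
  have -> : \sum_(i <- s1 ++ s2) (b * g1 i - a * g2 i)%:~R * F i =
    b%:~R * \sum_(i <- s1 ++ s2) (g1 i)%:~R * F i - a%:~R * \sum_(i <- s1 ++ s2) (g2 i)%:~R * F i.
    rewrite !mulr_sumr -sumrB; apply: eq_bigr => i _.
    by rewrite rmorphB !rmorphM /= mulrBl !mulrA.
  rewrite catL; last by move=> i /g1z ->; rewrite mul0r.
  by rewrite catR //; move=> i /g2z ->; rewrite mul0r.
Qed.

Lemma kern (xs : seq (I -> int)) (J' : set I) : infinite_set J' ->
  exists (g : I -> int) (s : seq T),
  [/\ uniq s, (forall i : T, i \in s -> J' i), (forall i : T, g i != 0 -> i \in s),
      (exists i : T, g i != 0) & (forall x, x \in xs -> \sum_(i <- s) g i * x i = 0)].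
Proof.
elim: xs J' => [|y xs IH] J' Jinf.
  have [j Jj] := infinite_setN0 Jinf.
  exists (fun i => if ceq i j then 1 else 0), [:: (j : T)]; split => //.
  - by move=> i; rewrite inE => /eqP ->.
  - by move=> i; rewrite inE /ceq; case: ifP.
  - by exists j; rewrite /ceq eqxx.
have [g1 [s1 [u1 J1 S1 [i1 nz1] K1]]] := IH J' Jinf.
set a := \sum_(i <- s1) g1 i * y i.
case: (boolP (a == 0)) => [/eqP a0|a0].
  exists g1, s1; split => //; first by exists i1.
  by move=> x; rewrite in_cons => /orP[/eqP ->|/K1].
have Jinf2 : infinite_set (J' `\` [set` s1]) := infinite_setD Jinf (finite_seq s1).
have [g2 [s2 [u2 J2 S2 nz2 K2]]] := IH _ Jinf2.
set b := \sum_(i <- s2) g2 i * y i.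
have [u J3 S3 nz3 E] := comb g1 g2 s1 s2 J' a b u1 u2 J1 J2 S1 S2 nz2 a0.
exists (fun i => b * g1 i - a * g2 i), (s1 ++ s2); split => // x xin.
have := E _ x; rewrite !intz.
under eq_bigr do rewrite intz.
under [X in _ = _ * X - _]eq_bigr do rewrite intz.
under [X in _ = _ - _ * X]eq_bigr do rewrite intz.
move=> ->.
move: xin; rewrite in_cons => /orP[/eqP ->|xin].
  by rewrite -/a -/b mulrC subrr.
by rewrite K1 // K2 // !mulr0 subrr.
Qed.
End Comb.
Section S.
Variable R : realType.
Lemma step2 (z : int) (y : R) : 4^-1 <= y <= 2^-1 ->
  4^-1 <= `|z%:~R + y| /\ 4^-1 <= `|z%:~R - y|.
Proof.
move=> /andP[y1 y2].
have [z0|z0] := lerP 0 z.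
  have : (0:R) <= z%:~R by rewrite ler0z.
  move=> h; split; rewrite ler_normr; apply/orP.
  - left; lra.
  - have [z1|z1] := lerP 1 z.
      have : (1:R) <= z%:~R by rewrite ler1z.
      move=> h'; left; lra.
    have -> : z = 0 by lia.
    rewrite /=; right; lra.
have : z%:~R <= (-1:R).
  have -> : (-1 : R) = (-1 : int)%:~R by rewrite rmorphN1.
  by rewrite ler_int; lia.
move=> h; split; rewrite ler_normr; apply/orP; right; lra.
Qed.

Lemma step1 (d : R) : 0 < d <= 2^-1 ->
  exists N : nat, (0 < N)%N /\ 4^-1 <= N%:R * d <= 2^-1.
Proof.
move=> /andP[d0 d2].
have [d4|d4] := lerP (4^-1) d.
  by exists 1%N; split => //; rewrite mul1r d4 d2.
pose P := fun n : nat => 4^-1 <= n%:R * d.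
have exP : exists n, P n.
  exists (Num.bound (d^-1)); rewrite /P.
  have dv : 0 <= d^-1 by rewrite invr_ge0 ltW.
  have h := archi_boundP dv.
  have : d^-1 * d <= (Num.bound (d^-1))%:R * d.
    by rewrite ler_pM2r // ltW.
  rewrite mulVf ?gt_eqF //; lra.
case: (ex_minnP exP) => n Pn nmin.
have n0 : (0 < n)%N.
  case: n Pn nmin => // ; rewrite /P mul0r; lra.
exists n; split => //; apply/andP; split; first exact: Pn.
have : ~ P n.-1.
  move=> h; have := nmin _ h; lia.
rewrite /P => h; have e : n%:R * d = (n.-1)%:R * d + d.
  by rewrite -[in LHS](prednK n0) -addn1 natrD mulrDl mul1r.
rewrite e; lra.
Qed.

Lemma far (a : R) : (forall k : int, a != k%:~R) ->
  exists N : nat, (0 < N)%N /\ forall k : int, 4^-1 <= `|N%:R * a - k%:~R|.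
Proof.
move=> na.
set m := Num.floor a.
have h1 := floor_le a; have h2 := floorD1_gt a.
rewrite -/m in h1 h2; rewrite rmorphD /= rmorph1 in h2.
have am : a != m%:~R := na m.
have am' : m%:~R < a by rewrite lt_neqAle eq_sym am h1.
have [f2|f2] := lerP (a - m%:~R) (2^-1).
  have [|N [N0 HN]] := step1 (a - m%:~R); first by apply/andP; split => //; lra.
  exists N; split => // k.
  have := (step2 (N%:Z * m - k) _ HN).1.
  by rewrite rmorphB rmorphM /=; congr (_ <= `|_|); rewrite mulrBr; lra.
have [|N [N0 HN]] := step1 ((m%:~R + 1) - a); first by apply/andP; split => //; lra.
exists N; split => // k.
have := (step2 (N%:Z * (m + 1) - k) _ HN).2.
by rewrite rmorphB rmorphM rmorphD /=; congr (_ <= `|_|); rewrite mulrBr mulrDr; lra.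
Qed.
End S.

Theorem lemma4p13 (R : realType) (I : Type) (t : I -> R) (J : set I) :
  ~ ulam_measurable I ->
  (forall i, in_T (t i)) ->
  infinite_set J ->
  (forall i, J i -> ~ is_rational (t i)) ->
  Q_lin_indep t J ->
  ~ in_dual t.
Proof.
move=> _ _ Jinf _ indep dual.
have H0 : in_H (fun _ : I => 0 : int).
  apply: (sub_finite_set _ (finite_set0 {classic I})) => i h.
  have h' : is_true ((0:int) != 0) := h. by rewrite eqxx in h'.
have [xs Hxs] := dual _ H0 (4^-1) ltac:(by rewrite invr_gt0).
pose al (g : I -> int) (s : seq {classic I}) := \sum_(i <- s) (g i)%:~R * t i.
have nzal : forall g s, uniq s -> (forall i : {classic I}, i \in s -> J i) ->
    (forall i : {classic I}, g i != 0 -> i \in s) -> (exists i : {classic I}, g i != 0) ->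
    al g s != 0.
  move=> g s u sJ S [i gi]; apply/eqP => h.
  have := indep s (fun i => (g i)%:Q) u sJ.
  have h' : \sum_(i <- s) ratr (g i)%:Q * t i = 0.
    by rewrite -[RHS]h /al; apply: eq_bigr => j _; rewrite ratr_int.
  move=> /(_ h' i (S i gi)) /eqP; rewrite intr_eq0 => /eqP gi0.
  by move: gi; rewrite gi0 eqxx.
have [g [s [[u sJ S nz K] nint]]] : exists g s,
    [/\ uniq s, (forall i : {classic I}, i \in s -> J i),
      (forall i : {classic I}, g i != 0 -> i \in s), (exists i : {classic I}, g i != 0)
      & (forall x, x \in xs -> \sum_(i <- s) g i * x i = 0)] /\
    forall k : int, al g s != k%:~R.
  have [g1 [s1 [u1 J1 S1 nz1 K1]]] := @kern I xs _ Jinf.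
  case: (pselect (exists k1 : int, al g1 s1 = k1%:~R)) => [[k1 e1]|n1]; last first.
    exists g1, s1; split => // k; apply/eqP => e; apply: n1; by exists k.
  have Jinf2 : infinite_set (J `\` [set` s1]) := infinite_setD Jinf (finite_seq s1).
  have [g2 [s2 [u2 J2 S2 nz2 K2]]] := @kern I xs _ Jinf2.
  case: (pselect (exists k2 : int, al g2 s2 = k2%:~R)) => [[k2 e2]|n2]; last first.
    exists g2, s2; split; last by move=> k; apply/eqP => e; apply: n2; exists k.
    by split => // i /J2 [].
  exfalso.
  have k10 : k1 != 0.
    apply/eqP => k0; have := nzal _ _ u1 J1 S1 nz1; by rewrite e1 k0 eqxx.
  have k20 : k2 != 0.
    apply/eqP => k0; have := nzal _ _ u2 (fun i h => (J2 i h).1) S2 nz2; by rewrite e2 k0 eqxx.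
  have [u' J' S' _ E] := @comb I g1 g2 s1 s2 J k1 k2 u1 u2 J1 J2 S1 S2 nz2 k10.
  have [i1 nzi1] := nz1.
  have g2i1 : g2 i1 = 0.
    apply/eqP; apply/negP => /negP /S2 /J2 [_]; apply.
    by move: (S1 _ nzi1).
  have := nzal _ _ u' J' S'.
  rewrite /al E -/(al g1 s1) -/(al g2 s2) e1 e2 -!rmorphM /= mulrC subrr eqxx.
  move=> h; suff: ~~ true by []. apply: h; exists i1; by rewrite g2i1 mulr0 subr0 mulf_neq0.
have [N [N0 HN]] := @far R _ nint.
pose gN := fun i : I => (N%:Z * g i)%R.
have SN : forall i : {classic I}, gN i != 0 -> i \in s.
  by move=> i; rewrite /gN mulf_eq0 negb_or => /andP[_ /S].
have HgN : in_H gN.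
  apply: (sub_finite_set _ (finite_seq s)) => i; exact: SN.
have [|k hk] := Hxs gN HgN.
  move=> x xin; rewrite /pairing (@sumE I _ _ _ _ u SN); last by move=> i ->; rewrite mul0r.
  rewrite fsbig1; last by move=> i _; rewrite mul0r.
  under eq_bigr do rewrite /gN -mulrA.
  by rewrite -mulr_sumr K // mulr0.
move: hk; rewrite /char_val (@sumE I _ _ _ _ u SN); last by move=> i ->; rewrite mul0r.
rewrite fsbig1; last by move=> i _; rewrite mul0r.
have -> : \sum_(i <- s) (gN i)%:~R * t i = N%:R * al g s.
  rewrite /al mulr_sumr; apply: eq_bigr => i _.
  by rewrite /gN rmorphM /= mulrA.
rewrite subr0 => hk.
by have := HN k; rewrite leNgt hk.
Qed.
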